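(* There exists a dataset of size $n$ for which the disagreement coefficient of the class of binary decision trees (of height at most $d\ge2$, over $\mathrm{dim}\ge2$ input dimensions) is $\Omega(n)$, even if nodes are restricted to test dimensions that are unique along every root-to-leaf path.
   Context: A decision tree routes a point $x\in\mathbb{R}^{\mathrm{dim}}$ from the root; each internal node compares one coordinate $x_a$ with a threshold, each leaf carries a label in $\{0,1\}$. For a dataset $S$ of $n$ points and class $H$: $D_S(h,h')=\frac1n\sum_{x\in S}\mathbb{I}(h(x)\ne h'(x))$, $B_H(h,r)=\{h'\in H:D_S(h,h')\le r\}$, $\mathrm{DIS}_S(V)=\{x\in S:\exists h_1,h_2\in V,h_1(x)\ne h_2(x)\}$, $\theta_h=\sup_{r>0}\frac{|\mathrm{DIS}_S(B_H(h,r))|}{rn}$, $\theta=\sup_{h\in H}\theta_h$. *)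

(* Defs.v *)
From HB Require Import structures.
From mathcomp Require Import all_boot all_order all_algebra.
From mathcomp Require Import boolp classical_sets reals constructive_ereal ereal.
Set Implicit Arguments. Unset Strict Implicit. Unset Printing Implicit Defensive.
Import Order.TTheory GRing.Theory Num.Theory.
Local Open Scope ring_scope.
Local Open Scope classical_set_scope.

Inductive dtree (R : Type) (dim : nat) :=
| Leaf of bool
| Node of 'I_dim & R & dtree R dim & dtree R dim.

Arguments Leaf {R dim}.

Fixpoint dt_eval (R : realType) (dim : nat) (T : dtree R dim) (x : 'rV[R]_dim) : bool :=
  match T with
  | Leaf b => b
  | Node a t l r => if x ord0 a <= t then dt_eval l x else dt_eval r x
  end.

Fixpoint dt_height (R : Type) (dim : nat) (T : dtree R dim) : nat :=
  match T with
  | Leaf _ => 0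
  | Node _ _ l r => (maxn (dt_height l) (dt_height r)).+1
  end.

Fixpoint dt_unique_path (R : Type) (dim : nat) (used : seq 'I_dim) (T : dtree R dim) : bool :=
  match T with
  | Leaf _ => true
  | Node a _ l r => (a \notin used) && dt_unique_path (a :: used) l
                                   && dt_unique_path (a :: used) r
  end.

Definition DT_class (R : realType) (dim d : nat) : set ('rV[R]_dim -> bool) :=
  [set h | exists T : dtree R dim, (dt_height T <= d)%N /\ h = dt_eval T].

Definition DT_unique_class (R : realType) (dim d : nat) : set ('rV[R]_dim -> bool) :=
  [set h | exists T : dtree R dim,
      (dt_height T <= d)%N /\ dt_unique_path [::] T /\ h = dt_eval T].

Section Disagreement.
Variables (R : realType) (X : Type) (n : nat) (S : 'I_n -> X).

Definition distS (h h' : X -> bool) : R :=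
  (#|[set i : 'I_n | h (S i) != h' (S i)]|)%:R / n%:R.

Definition ballH (H : set (X -> bool)) (h : X -> bool) (r : R) : set (X -> bool) :=
  [set h' | H h' /\ distS h h' <= r].

(* DIS_S(V), as a set of indices of points of S *)
Definition DIS (V : set (X -> bool)) : {set 'I_n} :=
  [set i : 'I_n | `[< exists h1 h2, V h1 /\ V h2 /\ h1 (S i) != h2 (S i) >]].

Definition theta_h (H : set (X -> bool)) (h : X -> bool) : \bar R :=
  ereal_sup [set ((#|DIS (ballH H h r)|)%:R / (r * n%:R))%:E | r in [set r : R | 0 < r]].

Definition theta (H : set (X -> bool)) : \bar R :=
  ereal_sup [set theta_h H h | h in H].

End Disagreement.

(* Main.v *)
Require Import Defs.
From HB Require Import structures.
From mathcomp Require Import all_boot all_order all_algebra.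
From mathcomp Require Import boolp classical_sets reals constructive_ereal ereal.
Import Order.TTheory GRing.Theory Num.Theory.
Local Open Scope ring_scope.

Section Aux.
Variables (R : realType) (n : nat) (X : Type) (S : 'I_n -> X).

Lemma theta_ge (H : set (X -> bool)) (h0 : X -> bool) (hs : 'I_n -> X -> bool) :
  (0 < n)%N -> H h0 -> (forall i, H (hs i)) ->
  (forall i j, hs i (S j) = (h0 (S j) != (j == i))) ->
  ((n%:R : R)%:E <= theta R S H)%E.
Proof.
move=> n0 Hh0 Hhs hsE.
have nR : (n%:R : R) != 0 by rewrite pnatr_eq0 -lt0n.
apply: le_trans; last by apply: ereal_sup_ubound; exists h0.
set r := (n%:R : R)^-1.
have r0 : 0 < r by rewrite invr_gt0 ltr0n.
apply: le_trans; last by apply: ereal_sup_ubound; exists r.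
rewrite lee_fin /r mulVf // divr1.
have -> : DIS S (ballH S H h0 r) = [set: 'I_n].
  apply/setP => i; rewrite !inE; apply/asboolP.
  exists h0, (hs i); split; [|split].
  - split => //; rewrite /distS.
    rewrite (@eq_card0 _ _); first by rewrite mul0r ltW.
    by move=> j; apply/negbTE/negP => /set_mem /=; rewrite eqxx.
  - split => //; rewrite /distS.
    rewrite (@eq_card1 _ i); first by rewrite mul1r.
    move=> j; rewrite inE; apply/idP/idP => Hj.
      have := set_mem Hj => /=.
      by rewrite hsE; case: (h0 (S j)); case: (j == i).
    apply/mem_set => /=; rewrite hsE Hj; case: (h0 (S j)) => //.
  - by rewrite hsE eqxx; case: (h0 (S i)).
by rewrite cardsT card_ord.
Qed.
End Aux.

Theorem theorem4 (R : realType) :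
  exists (c : R) (N : nat), 0 < c /\
    forall d dim n : nat, (2 <= d)%N -> (2 <= dim)%N -> (N <= n)%N ->
      exists S : 'I_n -> 'rV[R]_dim,
        injective S /\
        ((c * n%:R)%:E <= theta R S (@DT_unique_class R dim d))%E /\
        ((c * n%:R)%:E <= theta R S (@DT_class R dim d))%E.
Proof.
exists 1, 1%N; split => // d dim n d2 dim2 n1.
case: dim dim2 => [|[|dim]] // _.
pose a1 : 'I_dim.+2 := Ordinal (isT : (1 < dim.+2)%N).
pose S := fun i : 'I_n => \row_(j < dim.+2) (if j == ord0 then (i : nat)%:R else - (i : nat)%:R : R).
pose T := fun i : 'I_n => @Node R dim.+2 ord0 (i%:R)
   (Node a1 (- (i : nat)%:R) (Leaf true) (Leaf false)) (Leaf false).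
have TE : forall i j, dt_eval (T i) (S j) = (false != (j == i)).
  move=> i j; rewrite /= /S !mxE /= lerN2 !ler_nat.
  case: (ltngtP i j) => h; rewrite -val_eqE /=.
  - by rewrite gtn_eqF.
  - by rewrite ltn_eqF.
  - by rewrite h eqxx.
have Sinj : injective S.
  move=> i j /rowP /(_ ord0); rewrite !mxE eqxx => /eqP; rewrite eqr_nat.
  by move/eqP/val_inj.
exists S; split => //; rewrite mul1r; split.
- apply: (@theta_ge R n _ S _ (dt_eval (Leaf false)) (fun i => dt_eval (T i))); [exact: n1| | |by move=> i j; rewrite TE].
  + by exists (Leaf false).
  + move=> i; exists (T i); split; first exact: d2.
    by split.
- apply: (@theta_ge R n _ S _ (dt_eval (Leaf false)) (fun i => dt_eval (T i))); [exact: n1| | |by move=> i j; rewrite TE].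
  + by exists (Leaf false).
  + by move=> i; exists (T i); split; first exact: d2.
Qed.
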